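(* Let $\mathbf u$ be an infinite word over a finite alphabet whose language is closed under reversal. Suppose that both the defect $D(\mathbf u)$ and the sum $\sum_{n=0}^{+\infty}T_{\mathbf u}(n)$ are finite. Then $$2D(\mathbf u)=\sum_{n=0}^{+\infty}T_{\mathbf u}(n).$$
   Context: For a finite word $w=w_0\cdots w_{n-1}$ its reversal is $\overline{w}=w_{n-1}\cdots w_0$; $w$ is a palindrome if $w=\overline{w}$ (the empty word is a palindrome). The language $\mathcal L(\mathbf u)$ is the set of all finite factors of $\mathbf u$, and $\mathcal L_n(\mathbf u)$ those of length $n$; the language is closed under reversal if $w\in\mathcal L(\mathbf u)$ implies $\overline w\in\mathcal L(\mathbf u)$. The factor complexity is $\mathcal C_{\mathbf u}(n)=\#\mathcal L_n(\mathbf u)$ and the palindromic complexity $\mathcal P_{\mathbf u}(n)$ is the number of palindromes in $\mathcal L_n(\mathbf u)$. Define $T_{\mathbf u}(n)=\mathcal C_{\mathbf u}(n+1)-\mathcal C_{\mathbf u}(n)+2-\mathcal P_{\mathbf u}(n+1)-\mathcal P_{\mathbf u}(n)$. The defect of a finite word $w$ is $D(w)=|w|+1-(\text{number of distinct palindromic factors of } w, \text{ including the empty word})$. The defect of an infinite word is $D(\mathbf u)=\sup\{D(w): w \text{ a prefix of } \mathbf u\}$ (possibly $+\infty$). *)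

(* Defs.v *)
From mathcomp Require Import all_boot all_order all_algebra.
From mathcomp Require Import boolp.
Set Implicit Arguments. Unset Strict Implicit. Unset Printing Implicit Defensive.
Import Order.TTheory GRing.Theory Num.Theory.

Definition is_factor (A : finType) (u : nat -> A) (w : seq A) : Prop :=
  exists i : nat, w = [seq u (i + k) | k <- iota 0 (size w)].

Definition closed_under_reversal (A : finType) (u : nat -> A) : Prop :=
  forall w : seq A, is_factor u w -> is_factor u (rev w).

Definition palindrome (A : eqType) (w : seq A) : bool := w == rev w.

Definition factor_complexity (A : finType) (u : nat -> A) (n : nat) : nat :=
  #|[set t : n.-tuple A | `[< is_factor u (tval t) >]]|.

Definition pal_complexity (A : finType) (u : nat -> A) (n : nat) : nat :=
  #|[set t : n.-tuple A | `[< is_factor u (tval t) >] && palindrome (tval t)]|.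

Definition T_u (A : finType) (u : nat -> A) (n : nat) : int :=
  (factor_complexity u n.+1)%:Z - (factor_complexity u n)%:Z + 2
  - (pal_complexity u n.+1)%:Z - (pal_complexity u n)%:Z.

Definition factors_of (A : eqType) (w : seq A) : seq (seq A) :=
  [seq take j (drop i w) | i <- iota 0 (size w).+1, j <- iota 0 (size w - i).+1].

(* number of distinct palindromic factors of w, including the empty word *)
Definition num_pal_factors (A : eqType) (w : seq A) : nat :=
  size (undup [seq v <- factors_of w | palindrome v]).

Definition defect (A : eqType) (w : seq A) : int :=
  (size w)%:Z + 1 - (num_pal_factors w)%:Z.

Definition prefix (A : finType) (u : nat -> A) (n : nat) : seq A :=
  [seq u k | k <- iota 0 n].

Definition defect_is (A : finType) (u : nat -> A) (d : int) : Prop :=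
  (forall n, defect (prefix u n) <= d)%R /\
  (forall e : int, (forall n, defect (prefix u n) <= e)%R -> (d <= e)%R).

(* the series sum_{n>=0} T_u(n) converges (is finite) with value S:
   for an integer-valued series this means the partial sums are eventually S *)
Definition T_sum_is (A : finType) (u : nat -> A) (S : int) : Prop :=
  exists N : nat, forall m : nat, (N <= m)%N ->
    (\sum_(n < m) T_u u n)%R = S.

(* Main.v *)
Require Import Defs.
From mathcomp Require Import all_boot all_order all_algebra.
From mathcomp Require Import zify boolp.
From Stdlib Require Import Classical.
Import Order.TTheory GRing.Theory Num.Theory.

Set Implicit Arguments. Unset Strict Implicit. Unset Printing Implicit Defensive.

Section Fin.
Variable A : finType.
Implicit Types (w s p q : seq A) (a : A).

Definition suf n s := drop (size s - n) s.

Lemma size_suf n s : n <= size s -> size (suf n s) = n.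
Proof. move=> h; rewrite /suf size_drop; lia. Qed.

Lemma suffix_sufE v s : suffix v s = (v == suf (size v) s).
Proof. by rewrite suffixE eq_sym. Qed.

Lemma suffix_suf n s : suffix (suf n s) s.
Proof. exact: suffix_drop. Qed.

Lemma suffix_short q p s : suffix q s -> suffix p s -> size q <= size p -> suffix q p.
Proof.
rewrite !suffixE => /eqP hq /eqP hp hle.
have hps : size p = size s - (size s - size p) by rewrite -{1}hp size_drop.
have hqs : size q = size s - (size s - size q) by rewrite -{1}hq size_drop.
apply/eqP.
have -> : drop (size p - size q) p = drop (size p - size q) (drop (size s - size p) s) by rewrite hp.
rewrite drop_drop -{2}hq; congr drop. move: hle hps hqs; move: (size p) (size q) (size s) => x y z; lia.
Qed.

Lemma pal_pre w a p q : palindrome p -> suffix p (rcons w a) -> suffix q p ->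
  size q < size p -> infix (rev q) w.
Proof.
move=> /eqP pp /suffixP[x hx] /suffixP[x' hp] hlt.
have hx'0 : 0 < size x' by move: hlt; rewrite hp size_cat; move: (size x') (size q) => m k; lia.
have : p = rev q ++ rev x' by rewrite {1}pp hp rev_cat.
case/lastP: (rev x') (size_rev x') hx'0 => [|y b] hsz hx'0 hp2.
  by rewrite -hsz in hx'0.
move: hx; rewrite hp2 -rcons_cat -rcons_cat => /rcons_inj[-> _].
by rewrite infix_infix.
Qed.

Lemma infix_eq_size v s : infix v s -> size v = size s -> v = s.
Proof.
case/infixP=> x [y ->]; rewrite !size_cat => h.
have hx : size x = 0 by move: h; move: (size x) (size y) (size v) => ? ? ?; lia.
have hy : size y = 0 by move: h; move: (size x) (size y) (size v) => ? ? ?; lia.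
by move/size0nil: hx => ->; move/size0nil: hy => ->; rewrite cats0.
Qed.


Definition PL w n : {set n.-tuple A} :=
  [set t : n.-tuple A | infix (tval t) w && palindrome (tval t)].
Definition UL w n : {set n.-tuple A} :=
  [set t : n.-tuple A | infix (tval t) w || infix (rev (tval t)) w].

Lemma mem_factors v w : (v \in factors_of w) = infix v w.
Proof.
apply/allpairsPdep/idP.
  case=> i [j [_ _ ->]].
  exact: infix_trans (infix_take _ _) (infix_drop _ _).
case/infixP => x [y ->]; exists (size x), (size v); split.
- rewrite mem_iota !size_cat /=; move: (size x) (size v) (size y) => ? ? ?; lia.
- rewrite mem_iota !size_cat /=; move: (size x) (size v) (size y) => ? ? ?; lia.
- by rewrite drop_size_cat // take_size_cat.
Qed.

Lemma sum_eq1 (k B : nat) : k < B -> \sum_(n < B) (k == n : nat) = 1.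
Proof.
move=> hk; rewrite (bigD1 (Ordinal hk)) //= eqxx big1 // => i hi.
case: eqP => // e; move: hi; suff -> : i = Ordinal hk by rewrite eqxx.
by apply: val_inj; rewrite /= e.
Qed.

Lemma size_count_sum (L : seq (seq A)) B : all (fun v => size v < B) L ->
  size L = \sum_(n < B) count (fun v => size v == n) L.
Proof.
elim: L => [|x L IH] /=; first by rewrite big1.
case/andP=> hx hL; rewrite big_split /= IH // sum_eq1 //.
Qed.

Lemma count_PL w n :
  count (fun v => size v == n) (undup [seq v <- factors_of w | palindrome v]) = #|PL w n|.
Proof.
rewrite -size_filter cardE -(size_map (@tval n A)); apply: perm_size.
apply: uniq_perm.
- by rewrite filter_uniq // undup_uniq.
- by rewrite (map_inj_uniq val_inj) // enum_uniq.
move=> v; rewrite mem_filter mem_undup mem_filter mem_factors.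
apply/idP/mapP.
  case/andP=> hs /andP[hp hi]; exists (Tuple hs) => //.
  by rewrite mem_enum inE /= hi hp.
by case=> t; rewrite mem_enum inE => /andP[hi hp] ->; rewrite size_tuple eqxx hi hp.
Qed.

Lemma num_pal_sum w B : size w < B -> num_pal_factors w = \sum_(n < B) #|PL w n|.
Proof.
move=> hB; rewrite /num_pal_factors (size_count_sum (B := B)).
  by apply: eq_bigr => n _; rewrite count_PL.
apply/allP => v; rewrite mem_undup mem_filter mem_factors => /andP[_ /size_infix].
move: (size v) (size w) hB => ? ? ? ?; lia.
Qed.

Definition newpal w a n : bool :=
  [&& n <= (size w).+1, palindrome (suf n (rcons w a)) & ~~ infix (suf n (rcons w a)) w].

Lemma PL_rcons w a n : #|PL (rcons w a) n| = #|PL w n| + newpal w a n.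
Proof.
case: (boolP (newpal w a n)) => hnp.
  have hs : size (suf n (rcons w a)) == n.
    by case/and3P: hnp => h _ _; rewrite size_suf // size_rcons.
  have -> : PL (rcons w a) n = Tuple hs |: PL w n.
    apply/setP => t; rewrite !inE infix_rconsl suffix_sufE size_tuple.
    case/and3P: hnp => _ hp hi.
    case E: (t == Tuple hs).
      by rewrite (eqP E) /= eqxx hp.
    have -> : (tval t == suf n (rcons w a)) = false.
      by apply/negbTE; apply: contraFN E => /eqP e; apply/eqP/val_inj.
    done.
  rewrite cardsU1 addnC; congr (_ + _); rewrite inE /=.
  by case/and3P: hnp => _ _ /negbTE ->.
rewrite addn0; have -> // : PL (rcons w a) n = PL w n; apply/setP => t; rewrite !inE infix_rconsl suffix_sufE size_tuple.
case E: (tval t == suf n (rcons w a)) => //=.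
case hp: (palindrome t); rewrite ?andbF ?andbT //.
move: hnp; rewrite /newpal -(eqP E) hp /=.
have -> /= : n <= (size w).+1; last by case: (infix t w).
by rewrite -[n](size_tuple t) (eqP E) /suf size_drop size_rcons leq_subr.
Qed.


Lemma newpal_lt w a n m : newpal w a n -> newpal w a m -> m < n -> False.
Proof.
case/and3P=> hn hpn _ /and3P[hm hpm him] hlt.
have hs : size (rcons w a) = (size w).+1 by rewrite size_rcons.
have := @pal_pre w a (suf n (rcons w a)) (suf m (rcons w a)) hpn (suffix_suf _ _).
rewrite -(eqP hpm) (negbTE him) => H; suff : false by []; apply: H.
  apply: (suffix_short (s := rcons w a)); rewrite ?suffix_suf // !size_suf ?hs //; exact: ltnW.
by rewrite !size_suf ?hs.
Qed.

Lemma newpal_uniq w a n m : newpal w a n -> newpal w a m -> n = m.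
Proof.
move=> hn hm; case: (ltngtP m n) => // h.
  by case: (newpal_lt hn hm h).
by case: (newpal_lt hm hn h).
Qed.

Lemma num_pal_rcons w a : num_pal_factors (rcons w a) =
  num_pal_factors w + \sum_(n < (size w).+2) newpal w a n.
Proof.
rewrite (@num_pal_sum w (size w).+2) // (@num_pal_sum (rcons w a) (size w).+2);
  last by rewrite size_rcons.
by rewrite -big_split; apply: eq_bigr => n _; rewrite PL_rcons.
Qed.

Lemma sum_newpal_cases w a B :
  (\sum_(n < B) newpal w a n = 0) \/
  exists n0, [/\ n0 < B, newpal w a n0 & \sum_(n < B) newpal w a n = 1].
Proof.
case: (pickP (fun i : 'I_B => newpal w a i)) => [i hi | h]; last first.
  by left; apply: big1 => i _; rewrite h.
right; exists i; split => //.
rewrite -(@sum_eq1 i B) //; apply: eq_bigr => n _.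
case hn: (newpal w a n); case: eqP => // e.
  by case: e; apply: newpal_uniq hi hn.
by move: hn; rewrite -e hi.
Qed.

Lemma num_pal_rcons_le w a : num_pal_factors (rcons w a) <= (num_pal_factors w).+1.
Proof.
rewrite num_pal_rcons; case: (sum_newpal_cases w a (size w).+2) => [->|[n0 [_ _ ->]]];
  by rewrite ?addn0 ?addn1.
Qed.


Definition InvP N w : Prop :=
  2 * (size w).+1 + 2 * \sum_(n < N.+1) #|PL w n| =
  2 * num_pal_factors w + 2 * N + #|UL w N| + #|PL w N|.

Lemma tuple_eqE n (t t' : n.-tuple A) : (t == t') = (tval t == tval t').
Proof. by []. Qed.

Lemma Inv_base w : InvP (size w) w.
Proof.
rewrite /InvP (@num_pal_sum w (size w).+1) //.
have hs : size w == size w by [].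
set t0 := Tuple hs.
have hUL : UL w (size w) = [set t0; rev_tuple t0].
  apply/setP => t; rewrite !inE !tuple_eqE /=.
  apply/idP/idP.
    case/orP => /infix_eq_size h.
      by rewrite h ?size_tuple ?eqxx.
    by rewrite -(revK t) h ?size_rev ?size_tuple ?eqxx ?orbT.
  by case/orP => /eqP ->; rewrite ?revK infix_refl ?orbT.
have hPL : PL w (size w) = if palindrome w then [set t0] else set0.
  apply/setP => t; rewrite !inE; case: ifP => hp.
    rewrite inE tuple_eqE /=.
    apply/idP/idP; first by case/andP => /infix_eq_size h _; rewrite h ?size_tuple.
    by move/eqP ->; rewrite infix_refl hp.
  rewrite inE; apply/negbTE; apply/negP => /andP[/infix_eq_size h]; by rewrite h ?size_tuple // hp.
rewrite hUL hPL cards2 tuple_eqE /=.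
case: ifP => hp; rewrite ?cards1 ?cards0; rewrite /palindrome in hp; rewrite hp /=;
  set S := \sum_(_ < _) _; move: S (size w) => S x /=; lia.
Qed.

Lemma UL_rcons w a N (t0 : N.-tuple A) : tval t0 = suf N (rcons w a) ->
  UL (rcons w a) N = t0 |: (rev_tuple t0 |: UL w N).
Proof.
move=> h0; apply/setP => t; rewrite !inE !infix_rconsl !suffix_sufE size_rev size_tuple.
rewrite !tuple_eqE /= -h0.
have -> : (rev t == t0) = (tval t == rev t0).
  by apply/eqP/eqP => [<-|->]; rewrite revK.
by case: (tval t == tval t0); case: (tval t == rev t0); case: (infix t w);
  case: (infix (rev t) w).
Qed.


Lemma sum_eq01 (k B : nat) : \sum_(n < B) (k == n : nat) = (k < B).
Proof.
case: (ltnP k B) => h; first exact: sum_eq1.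
apply: big1 => i _; case: eqP => // e; move: (ltn_ord i); rewrite -e; lia.
Qed.

Lemma Inv_step w a N : N <= size w ->
  num_pal_factors (rcons w a) = (num_pal_factors w).+1 -> InvP N w -> InvP N (rcons w a).
Proof.
move=> hN hnp; rewrite /InvP.
have [n0 [_ hn0 _]] : exists n0, [/\ n0 < (size w).+2, newpal w a n0 &
    \sum_(n < (size w).+2) newpal w a n = 1].
  case: (sum_newpal_cases w a (size w).+2) => // h0.
  by move: hnp; rewrite num_pal_rcons h0 addn0 => /n_Sn.
have hall : forall n, newpal w a n = (n0 == n).
  move=> n; case hn: (newpal w a n); first by rewrite (newpal_uniq hn0 hn) eqxx.
  by case: eqP => // e; move: hn; rewrite -e hn0.
have hsumPL : \sum_(n < N.+1) #|PL (rcons w a) n| = \sum_(n < N.+1) #|PL w n| + (n0 < N.+1).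
  rewrite -sum_eq01 -big_split; apply: eq_bigr => n _; by rewrite PL_rcons hall.
have hPLN : #|PL (rcons w a) N| = #|PL w N| + (n0 == N) by rewrite PL_rcons hall.
have hsig : size (suf N (rcons w a)) == N by rewrite size_suf // size_rcons; lia.
set t0 := Tuple hsig.
case/and3P: hn0 => hn0s hpal hninf.
have hULN : #|UL (rcons w a) N| = #|UL w N| + (if n0 < N then 2 else (n0 == N : nat)).
  rewrite (@UL_rcons w a N t0) // !cardsU1 !inE !tuple_eqE /=.
  case: (ltngtP n0 N) => hc.
  -
    have hps : suffix (suf n0 (rcons w a)) (suf N (rcons w a)).
      apply: (suffix_short (s := rcons w a)); rewrite ?suffix_suf // !size_suf ?size_rcons //;
      move: (size w) hN hc hn0s => ? ? ? ?; lia.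
    have hs1 : infix (suf N (rcons w a)) w = false.
      apply/negbTE; apply: contra hninf => h; exact: infix_trans (suffixW hps) h.
    have hs2 : infix (rev (suf N (rcons w a))) w = false.
      apply/negbTE; apply: contra hninf => h.
      rewrite (eqP hpal); apply: infix_trans h; apply: prefixW; by rewrite prefix_rev.
    have hs3 : (suf N (rcons w a) == rev (suf N (rcons w a))) = false.
      apply/negbTE/negP => hp2.
      have : newpal w a N by rewrite /newpal /palindrome hp2 hs1 /= andbT; move: (size w) hN => ? ?; lia.
      by rewrite hall; move/eqP => e; move: hc; rewrite e ltnn.
    rewrite hs1 hs2 revK hs3 hs1 /= addnC.
    by move: (#|UL w N|) => k; lia.
  -
    have hrs : infix (rev (suf N (rcons w a))) w.
      apply: (pal_pre hpal (suffix_suf _ _)).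
        apply: (suffix_short (s := rcons w a)); rewrite ?suffix_suf // !size_suf ?size_rcons //;
        move: (size w) hN hc hn0s => ? ? ? ?; lia.
      by rewrite !size_suf ?size_rcons //; move: (size w) hN hc hn0s => ? ? ? ?; lia.
    by rewrite hrs revK !orbT /= addn0.
  -
    subst n0; have hr : infix (rev (suf N (rcons w a))) w = false by rewrite -(eqP hpal) (negbTE hninf).
    rewrite -(eqP hpal) eqxx (negbTE hninf) /=; rewrite hr add0n addnC.
    done.
by rewrite hsumPL hPLN hULN size_rcons hnp; move: hN;
  case: (ltngtP n0 N) => hc;
  move: (\sum_(n < N.+1) #|PL w n|) (#|UL w N|) (#|PL w N|) (size w) (num_pal_factors w) => ? ? ? ? ?;
  lia.
Qed.

End Fin.

Section U.
Variable A : finType.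
Variable u : nat -> A.

Lemma prefix_S k : Defs.prefix u k.+1 = rcons (Defs.prefix u k) (u k).
Proof. by rewrite /Defs.prefix -addn1 iotaD map_cat /= add0n cats1. Qed.

Lemma size_uprefix k : size (Defs.prefix u k) = k.
Proof. by rewrite /Defs.prefix size_map size_iota. Qed.

Lemma map_iota_shift i n : [seq u (i + k) | k <- iota 0 n] = map u (iota i n).
Proof. by rewrite -{2}(addn0 i) iotaDl -map_comp. Qed.

Lemma factor_infix w : is_factor u w -> exists m, infix w (Defs.prefix u m).
Proof.
case=> i ->; exists (i + size w); rewrite /Defs.prefix iotaD map_cat add0n.
rewrite map_iota_shift; exact: suffix_infix.
Qed.

Lemma infix_factor w m : infix w (Defs.prefix u m) -> is_factor u w.
Proof.
move=> h; have := h; case/infixP => x [y e]; exists (size x).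
have hs : size x + size w <= m.
  by move: (congr1 size e); rewrite size_uprefix !size_cat => ->;
     move: (size x) (size w) (size y) => ? ? ?; lia.
rewrite map_iota_shift.
have : take (size w) (drop (size x) (Defs.prefix u m)) = w.
  by rewrite e drop_size_cat // take_size_cat.
rewrite /Defs.prefix -map_drop -map_take drop_iota take_iota add0n => <-.
by rewrite size_map size_iota.
Qed.

Lemma infix_prefix_mono w m m' : m <= m' -> infix w (Defs.prefix u m) -> infix w (Defs.prefix u m').
Proof.
move=> hm h; rewrite -(subnKC hm) /Defs.prefix iotaD map_cat.
exact: infix_catr.
Qed.

Lemma fin_bound (X : finType) (P : X -> Prop) (g : X -> nat -> bool) :
  (forall x m m', m <= m' -> g x m -> g x m') -> (forall x, P x -> exists m, g x m) ->
  exists M, forall x, P x -> g x M.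
Proof.
move=> hmono hex.
suff [M hM] : exists M, forall x, x \in enum X -> P x -> g x M.
  by exists M => x; apply: hM; rewrite mem_enum.
elim: (enum X) => [|x s [M IH]]; first by exists 0.
case: (classic (P x)) => hx.
  case: (hex x hx) => m hm; exists (maxn m M) => y; rewrite inE => /orP[/eqP -> _|hy hPy].
    by apply: hmono hm; apply: leq_maxl.
  by apply: (hmono _ M); [apply: leq_maxr | apply: IH].
exists M => y; rewrite inE => /orP[/eqP -> //|]; exact: IH.
Qed.

Lemma all_factors N : exists M, forall n, n <= N -> forall t : n.-tuple A,
  is_factor u t -> infix t (Defs.prefix u M).
Proof.
elim: N => [|N [M IH]].
  have [M hM] := @fin_bound (0.-tuple A) (fun t => is_factor u t)
    (fun t m => infix t (Defs.prefix u m)) (fun x m m' => @infix_prefix_mono x m m')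
    (fun t => @factor_infix t).
  by exists M => n; rewrite leqn0 => /eqP ->.
have [M' hM'] := @fin_bound (N.+1.-tuple A) (fun t => is_factor u t)
    (fun t m => infix t (Defs.prefix u m)) (fun x m m' => @infix_prefix_mono x m m')
    (fun t => @factor_infix t).
exists (maxn M M') => n; rewrite leq_eqVlt => /orP[/eqP -> | hn] t ht.
  by apply: (infix_prefix_mono (leq_maxr M M')); apply: hM'.
by apply: (infix_prefix_mono (leq_maxl M M')); apply: IH.
Qed.

End U.

Section V.
Variable A : finType.
Variable u : nat -> A.

Definition contains_all M N := forall n, n <= N -> forall t : n.-tuple A,
  is_factor u t -> infix t (Defs.prefix u M).

Lemma PL_eq M N n : contains_all M N -> n <= N ->
  #|PL (Defs.prefix u M) n| = pal_complexity u n.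
Proof.
move=> hM hn; apply: eq_card => t; rewrite !inE; congr (_ && _).
apply/idP/asboolP; [exact: infix_factor | exact: hM].
Qed.

Lemma UL_eq M N : closed_under_reversal u -> contains_all M N ->
  #|UL (Defs.prefix u M) N| = factor_complexity u N.
Proof.
move=> hrev hM; apply: eq_card => t; rewrite !inE.
apply/idP/asboolP.
  case/orP; first exact: infix_factor.
  by move/infix_factor/hrev; rewrite revK.
by move=> h; rewrite (hM N (leqnn N) t h).
Qed.

Lemma C0P0 : factor_complexity u 0 = pal_complexity u 0.
Proof.
apply: eq_card => t; rewrite !inE (tuple0 t) /=.
by rewrite /palindrome /= andbT.
Qed.

Local Open Scope ring_scope.

Lemma sumT N : \sum_(n < N) T_u u n =
  (factor_complexity u N)%:Z + (pal_complexity u N)%:Z + 2 * (N%:Z)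
  - 2 * (\sum_(n < N.+1) pal_complexity u n)%N%:Z.
Proof.
elim: N => [|N IH].
  rewrite big_ord0 big_ord1 C0P0; move: (pal_complexity u 0) => x; lia.
rewrite big_ord_recr /= IH (big_ord_recr N.+1) /= /T_u.
move: (factor_complexity u N) (factor_complexity u N.+1) (pal_complexity u N)
  (pal_complexity u N.+1) (\sum_(i < N.+1) pal_complexity u i)%N => ? ? ? ? ?.
lia.
Qed.

End V.

Unset Implicit Arguments. Set Strict Implicit.
Local Open Scope ring_scope.


Theorem theorem1 (A : finType) (u : nat -> A)
  (hrev : closed_under_reversal u)
  (d : int) (hD : defect_is u d)
  (S : int) (hS : T_sum_is u S) :
  2 * d = S.
Proof.
case: hD => hle hleast.
have hdef k : defect (Defs.prefix u k) =
    (k.+1)%:Z - (num_pal_factors (Defs.prefix u k))%:Z.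
  by rewrite /defect size_uprefix; move: (num_pal_factors _) => x; lia.
have hmono k : defect (Defs.prefix u k) <= defect (Defs.prefix u k.+1).
  rewrite !hdef; have := num_pal_rcons_le (Defs.prefix u k) (u k).
  rewrite -prefix_S; move: (num_pal_factors (Defs.prefix u k))
    (num_pal_factors (Defs.prefix u k.+1)) => x y; lia.
have hmono2 k j : defect (Defs.prefix u k) <= defect (Defs.prefix u (k + j)).
  elim: j => [|j IH]; first by rewrite addn0.
  by apply: le_trans IH _; rewrite addnS.
have [k0 hk0] : exists k0, defect (Defs.prefix u k0) = d.
  apply: NNPP => hne.
  have h : forall n, defect (Defs.prefix u n) <= d - 1.
    move=> n; have := hle n; have := not_ex_all_not _ _ hne n.
    move: (defect _) => x; lia.
  by have := hleast _ h; lia.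
have hconst k : (k0 <= k)%N -> defect (Defs.prefix u k) = d.
  move=> hk; apply/eqP; rewrite eq_le hle /= -hk0 -(subnKC hk); exact: hmono2.
have hnp k : (k0 <= k)%N -> num_pal_factors (Defs.prefix u k.+1) =
    (num_pal_factors (Defs.prefix u k)).+1.
  move=> hk; have h1 := hconst k hk; have h2 := hconst k.+1 (leqW hk).
  rewrite !hdef in h1 h2.
  move: h1 h2; move: (num_pal_factors (Defs.prefix u k))
    (num_pal_factors (Defs.prefix u k.+1)) => x y; lia.
have hInv N k : (k0 <= N)%N -> (N <= k)%N -> InvP N (Defs.prefix u k).
  move=> hN hk; rewrite -(subnKC hk); elim: (k - N)%N => [|j IH].
    by rewrite addn0; have := Inv_base (Defs.prefix u N); rewrite size_uprefix.
  rewrite addnS prefix_S; apply: Inv_step => //.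
    by rewrite size_uprefix leq_addr.
  by rewrite -prefix_S; apply: hnp; apply: leq_trans hN (leq_addr _ _).
case: hS => N0 hN0.
set N := maxn N0 k0.
have [M hM] := all_factors u N.
set M' := maxn M N.
have hM' : contains_all u M' N.
  move=> n hn t ht; apply: (infix_prefix_mono (leq_maxl M N)); exact: hM.
have hI := hInv N M' (leq_maxr N0 k0) (leq_maxr M N).
rewrite /InvP size_uprefix in hI.
have hsum : (\sum_(n < N.+1) #|PL (Defs.prefix u M') n|)%N =
    (\sum_(n < N.+1) pal_complexity u n)%N.
  by apply: eq_bigr => n _; apply: (PL_eq hM'); rewrite -ltnS.
rewrite hsum (PL_eq hM' (leqnn N)) (UL_eq hrev hM') in hI.
have hd := hconst M' (leq_trans (leq_maxr N0 k0) (leq_maxr M N)).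
rewrite hdef in hd.
rewrite -(hN0 N (leq_maxl N0 k0)) sumT.
clearbody M' N; clear -hI hd; move: hI hd.
move: M' N (\sum_(n < N.+1) pal_complexity u n)%N (factor_complexity u N)
  (pal_complexity u N) (num_pal_factors (Defs.prefix u M')) => f g a b c e.
lia.
Qed.
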